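(* Let $A$ be a finite set. The family $\mathscr U_A=\{U(\overset{*}{<})\}_{\overset{*}{<}\in R^+(A)}$ is a proper $\Sigma_A$-equivariant, good and complete open cover of the ordered configuration space $\mathrm{OConf}(A,\mathbb R^2)=\{f:A\to\mathbb R^2\mid f\text{ injective}\}$.
   Context: A strict partial order is a transitive irreflexive relation; it is semi-linear if it is induced by a surjection $h:A\to\{1,\dots,l\}$ (i.e. $a<b$ iff $h(a)<h(b)$). $<_1\bar\cup<_2$ denotes the transitive closure of the union. A double order on $A$ is a pair $\overset{*}{<}=(\overset{x}{<},\overset{y}{<})$ of strict partial orders such that any two distinct elements are comparable by $\overset{x}{<}$ or by $\overset{y}{<}$; regular if $\overset{x}{<}$ is semi-linear and $a\overset{x}{<}b$ implies $a,b$ are not $\overset{y}{<}$-comparable; semi-regular if it is the componentwise $\bar\cup$ of finitely many regular double orders. $R^+(A)$ is the set of semi-regular double orders. For a double order, $U(\overset{*}{<})=\{(f_x,f_y):A\to\mathbb R^2\mid a\overset{x}{<}b\Rightarrow f_x(a)<f_x(b),\ a\overset{y}{<}b\Rightarrow f_y(a)<f_y(b)\}$. $\Sigma_A$ acts on $\mathrm{OConf}(A,\mathbb R^2)$ by precomposition and on double orders by $(\overset{x}{<},\overset{y}{<})\sigma=(\overset{x}{<}\sigma,\overset{y}{<}\sigma)$, $a(\overset{x}{<}\sigma)b$ iff $\sigma(a)\overset{x}{<}\sigma(b)$ (similarly for $y$). A cover $\{U_i\}_{i\in I}$ is $G$-equivariant if $G$ acts on $I$ with $U_ig=U_{ig}$;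 proper if additionally $U_i\cap U_{ig}=\emptyset$ for $g\ne1$; good if all non-empty intersections are contractible; complete if closed under non-empty intersections. *)

(* Defs.v *)
From HB Require Import structures.
From mathcomp Require Import all_boot all_order all_algebra all_fingroup.
From mathcomp Require Import all_classical all_reals all_analysis.
From Stdlib Require Import Relations.Relation_Operators.
From Stdlib Require List.

Set Implicit Arguments.
Unset Strict Implicit.
Unset Printing Implicit Defensive.

Import Order.TTheory GRing.Theory Num.Theory.
Import numFieldNormedType.Exports.
Local Open Scope classical_set_scope.
Local Open Scope ring_scope.

Definition prel (A : Type) := A -> A -> Prop.

Definition strict_porder (A : Type) (r : prel A) : Prop :=
  (forall a, ~ r a a) /\ (forall a b c, r a b -> r b c -> r a c).

Definition comparable_by (A : Type) (r : prel A) (a b : A) : Prop :=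
  r a b \/ r b a.

Definition semi_linear (A : Type) (r : prel A) : Prop :=
  exists (l : nat) (h : A -> nat),
    (forall a, (1 <= h a <= l)%N) /\
    (forall k, (1 <= k <= l)%N -> exists a, h a = k) /\
    (forall a b, r a b <-> (h a < h b)%N).

Definition tc_union (A : Type) (rs : seq (prel A)) : prel A :=
  clos_trans A (fun a b => exists2 r, List.In r rs & r a b).

(** a double order is a pair (<x, <y) *)
Definition dord (A : Type) := (prel A * prel A)%type.

Definition is_double_order (A : Type) (d : dord A) : Prop :=
  strict_porder d.1 /\ strict_porder d.2 /\
  (forall a b, a <> b -> comparable_by d.1 a b \/ comparable_by d.2 a b).

Definition regular (A : Type) (d : dord A) : Prop :=
  is_double_order d /\ semi_linear d.1 /\
  (forall a b, d.1 a b -> ~ comparable_by d.2 a b).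

Definition dunion (A : Type) (ds : seq (dord A)) : dord A :=
  (tc_union (map fst ds), tc_union (map snd ds)).

Definition semi_regular (A : Type) (d : dord A) : Prop :=
  is_double_order d /\
  exists ds : seq (dord A), (forall e, List.In e ds -> regular e) /\ d = dunion ds.

Notation config R A := {ptws A -> (R * R)%type}.

Definition OConf (R : realType) (A : Type) : set (config R A) :=
  [set f | injective f].

Definition Uset (R : realType) (A : Type) (d : dord A) : set (config R A) :=
  [set f | (forall a b, d.1 a b -> (f a).1 < (f b).1) /\
           (forall a b, d.2 a b -> (f a).2 < (f b).2)].

(** right action of permutations *)
Definition dord_act (A : finType) (d : dord A) (s : {perm A}) : dord A :=
  (fun a b => d.1 (s a) (s b), fun a b => d.2 (s a) (s b)).

Definition conf_act (R : realType) (A : finType) (f : config R A) (s : {perm A})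
  : config R A := fun a => f (s a).

Definition set_act (R : realType) (A : finType) (U : set (config R A)) (s : {perm A})
  : set (config R A) := [set conf_act f s | f in U].

Definition open_in (T : topologicalType) (X U : set T) : Prop :=
  exists2 V, open V & U = V `&` X.

Definition contractible (R : realType) (T : topologicalType) (X : set T) : Prop :=
  exists2 c : T, X c &
  exists H : (R * T)%type -> T,
    [/\ {within [set p | 0 <= p.1 <= 1 /\ X p.2], continuous H},
        (forall t x, 0 <= t <= 1 -> X x -> X (H (t, x))),
        (forall x, X x -> H (0, x) = x) &
        (forall x, X x -> H (1, x) = c)].

Definition intersection (T : Type) (I : Type) (F : I -> set T) (ds : seq I) : set T :=
  [set x | forall d, List.In d ds -> F d x].

Arguments OConf R A : clear implicits.
Arguments Uset R {A} d.
Arguments contractible R {T} X.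
Arguments set_act {R A} U s.
Arguments intersection {T I} F ds.

(* Main.v *)
Require Import Defs.
From HB Require Import structures.
From mathcomp Require Import all_boot all_order all_algebra all_fingroup.
From mathcomp Require Import all_classical all_reals all_analysis.
From Stdlib Require List.
From Stdlib Require Import Relations.Relation_Operators.
From mathcomp Require Import lra.
Import numFieldNormedType.Exports.
Import Order.TTheory GRing.Theory Num.Theory.
Local Open Scope classical_set_scope.
Local Open Scope ring_scope.

Section S.
Variables (R : realType) (A : finType).
Lemma ev1_cont (a : A) : continuous (fun g : config R A => (g a).1).
Proof.
move=> g; apply: (@cvg_comp _ _ _ (fun g : config R A => g a) fst _ _ _ (@proj_continuous _ _ a g)).
exact: cvg_fst.
Qed.
Lemma ev2_cont (a : A) : continuous (fun g : config R A => (g a).2).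
Proof.
move=> g; apply: (@cvg_comp _ _ _ (fun g : config R A => g a) snd _ _ _ (@proj_continuous _ _ a g)).
exact: cvg_snd.
Qed.
Lemma near_lt (c1 c2 : config R A -> R) (f : config R A) :
  continuous c1 -> continuous c2 -> c1 f < c2 f -> \forall g \near f, c1 g < c2 g.
Proof.
move=> h1 h2 lt.
have c : {for f, continuous (fun g => c2 g - c1 g)} := continuousB (h2 f) (h1 f).
have : nbhs (c2 f - c1 f) [set x : R | 0 < x].
  by apply: open_nbhs_nbhs; split; [exact: open_gt | rewrite /= subr_gt0].
move=> /c h; apply: (@filterS _ _ _ (fun g => 0 < c2 g - c1 g)) h => g /=.
by rewrite subr_gt0.
Qed.
Lemma open_Uset (d : dord A) : open (Uset R d).
Proof.
rewrite openE => f [H1 H2].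
have h1 : \forall g \near f, forall p : A * A, d.1 p.1 p.2 -> (g p.1).1 < (g p.2).1.
  apply: (@filter_forall _ _ (fun p (g : config R A) => d.1 p.1 p.2 -> (g p.1).1 < (g p.2).1) (nbhs f) (nbhs_filter f)) => -[a b]; case: (pselect (d.1 a b)) => dab.
    have hh := @near_lt (fun g : config R A => (g a).1) (fun g : config R A => (g b).1) f (ev1_cont a) (ev1_cont b) (H1 _ _ dab).
    near=> g => /= _; exact: (near hh g).
  by near=> g => /=.
have h2 : \forall g \near f, forall p : A * A, d.2 p.1 p.2 -> (g p.1).2 < (g p.2).2.
  apply: (@filter_forall _ _ (fun p (g : config R A) => d.2 p.1 p.2 -> (g p.1).2 < (g p.2).2) (nbhs f) (nbhs_filter f)) => -[a b]; case: (pselect (d.2 a b)) => dab.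
    have hh := @near_lt (fun g : config R A => (g a).2) (fun g : config R A => (g b).2) f (ev2_cont a) (ev2_cont b) (H2 _ _ dab).
    near=> g => /= _; exact: (near hh g).
  by near=> g => /=.
change (\forall g \near f, Uset R d g). near=> g; split => a b ab; [exact: (near h1 g _ (a, b) ab) | exact: (near h2 g _ (a, b) ab)].
Unshelve. all: by end_near.
Qed.

Definition Hh (c : config R A) (p : R * config R A) : config R A :=
  fun a => ((1 - p.1) * (p.2 a).1 + p.1 * (c a).1, (1 - p.1) * (p.2 a).2 + p.1 * (c a).2).
Lemma fst_cont : continuous (fun p : R * config R A => p.1).
Proof. move=> p; exact: cvg_fst. Qed.
Lemma comp1_cont a : continuous (fun p : R * config R A => (p.2 a).1).
Proof. move=> p; exact: (@cvg_comp _ _ _ snd (fun g : config R A => (g a).1) _ _ _ cvg_snd (ev1_cont a p.2)). Qed.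
Lemma comp2_cont a : continuous (fun p : R * config R A => (p.2 a).2).
Proof. move=> p; exact: (@cvg_comp _ _ _ snd (fun g : config R A => (g a).2) _ _ _ cvg_snd (ev2_cont a p.2)). Qed.
Lemma config_cvg (T : topologicalType) (h : T -> config R A) (p : T) :
  (forall a, (fun q => h q a) @ p --> h p a) -> h @ p --> h p.
Proof.
move=> H.
apply/cvg_sup => a.
have surj : (fun g : config R A => g a) @` setT = setT.
  by rewrite eqEsubset; split => // y _; exists (fun=> y).
apply/cvg_image => //.
move=> N /H /= HN; exists ((fun g : config R A => g a) @^-1` N) => //.

by rewrite image_preimage.

Qed.
Lemma pair_cvg (T : topologicalType) (f g : T -> R) (p : T) :
  f @ p --> f p -> g @ p --> g p -> (fun q => (f q, g q)) @ p --> (f p, g p).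
Proof. by move=> hf hg; exact: (cvg_pair hf hg). Qed.
Lemma Hh_cont c : continuous (Hh c).
Proof.
move=> p; apply: config_cvg => a.
have h1 : (fun q : R * config R A => (1 - q.1) * (q.2 a).1 + q.1 * (c a).1) @ p --> ((1 - p.1) * (p.2 a).1 + p.1 * (c a).1).
  apply: cvgD; apply: cvgM.
  - apply: cvgB; [exact: cvg_cst | exact: fst_cont].
  - exact: comp1_cont.
  - exact: fst_cont.
  - exact: cvg_cst.
have h2 : (fun q : R * config R A => (1 - q.1) * (q.2 a).2 + q.1 * (c a).2) @ p --> ((1 - p.1) * (p.2 a).2 + p.1 * (c a).2).
  apply: cvgD; apply: cvgM.
  - apply: cvgB; [exact: cvg_cst | exact: fst_cont].
  - exact: comp2_cont.
  - exact: fst_cont.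
  - exact: cvg_cst.
exact: (@pair_cvg _ _ _ _ h1 h2).
Qed.
Lemma In_map (T U : Type) (f : T -> U) (l : seq T) y :
  List.In y (map f l) <-> exists x, f x = y /\ List.In x l.
Proof.
elim: l => [|x l IH] /=; first by split => [[]|[x [_ []]]].
split.
  case=> [<-|/IH [z [<- Hz]]]; first by exists x; split; [|left].
  by exists z; split; [|right].
case=> z [Hzy [Hx|Hz]]; first by left; rewrite Hx.
by right; apply/IH; exists z.
Qed.

Lemma In_cat (T : Type) (l1 l2 : seq T) y :
  List.In y (l1 ++ l2) <-> List.In y l1 \/ List.In y l2.
Proof.
elim: l1 => [|x l IH] /=; first by split => [H|[[]|H]]; [right|].
rewrite IH; tauto.
Qed.

Lemma tc_ind (r P : prel A) : (forall a b c, P a b -> P b c -> P a c) ->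
  (forall a b, r a b -> P a b) -> forall a b, clos_trans A r a b -> P a b.
Proof.
move=> Ptr rP a b; elim => [x y /rP //|x y z _ IH1 _ IH2]; exact: Ptr IH1 IH2.
Qed.

Lemma tc_sub (rs rs' : seq (prel A)) a b :
  (forall r, List.In r rs -> List.In r rs') -> tc_union rs a b -> tc_union rs' a b.
Proof.
move=> sub; apply: tc_ind => [x y z|x y [r /sub Hr rxy]]; first exact: t_trans.
by apply: t_step; exists r.
Qed.

Lemma tc_step (rs : seq (prel A)) r a b : List.In r rs -> r a b -> tc_union rs a b.
Proof. by move=> Hr rab; apply: t_step; exists r. Qed.

Lemma tc_nil a b : ~ tc_union ([::] : seq (prel A)) a b.
Proof. by elim => // x y [r []]. Qed.

Lemma tc_single (r : prel A) : (forall a b c, r a b -> r b c -> r a c) ->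
  tc_union [:: r] = r.
Proof.
move=> tr; apply: funext => a; apply: funext => b; apply: propext; split.
  by apply: tc_ind => // x y [r' [<-|[]]].
by apply: tc_step; left.
Qed.

Lemma dunion1 (e : dord A) : strict_porder e.1 -> strict_porder e.2 -> dunion [:: e] = e.
Proof.
case: e => e1 e2 [_ t1] [_ t2]; rewrite /dunion /= !tc_single //.
Qed.

Lemma tc_act (pr : dord A -> prel A) (s : {perm A}) (ds : seq (dord A)) :
  (forall e a b, pr (dord_act e s) a b <-> pr e (s a) (s b)) ->
  forall a b, tc_union (map pr (map (fun e => dord_act e s) ds)) a b <-> tc_union (map pr ds) (s a) (s b).
Proof.
move=> hpr a b; split.
  move: a b; apply: (@tc_ind _ (fun a b => tc_union (map pr ds) (s a) (s b))) => [x y z|x y [r]].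
    exact: t_trans.
  case/In_map => e' [<-] /In_map [e [<- He]] /hpr H.
  by apply: (@tc_step _ (pr e)) => //; apply/In_map; exists e.
have gen : forall x y, tc_union (map pr ds) x y ->
    tc_union (map pr (map (fun e => dord_act e s) ds)) ((s^-1)%g x) ((s^-1)%g y).
  apply: tc_ind => [x y z|x y [r]]; first exact: t_trans.
  case/In_map => e [<- He] Hxy.
  apply: (@tc_step _ (pr (dord_act e s))).
    by apply/In_map; exists (dord_act e s); split => //; apply/In_map; exists e.
  by apply/hpr; rewrite !permKV.
by move/gen; rewrite !permK.
Qed.

Lemma dord_act_double (d : dord A) (s : {perm A}) :
  is_double_order d -> is_double_order (dord_act d s).
Proof.
case=> [[i1 t1] [[i2 t2] cmp]]; split; [|split].
- by split => [a|a b c]; [exact: i1|exact: t1].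
- by split => [a|a b c]; [exact: i2|exact: t2].
move=> a b ab; apply: cmp => /(congr1 (s^-1)%g); rewrite !permK; exact: ab.
Qed.

Lemma regular_act (e : dord A) (s : {perm A}) : regular e -> regular (dord_act e s).
Proof.
case=> dd [[l [h [hr [hs hiff]]]] nxy]; split; first exact: dord_act_double.
split; last by move=> a b /nxy.
exists l, (fun a => h (s a)); split => // ; split => [k /hs [a ha]|a b].
  by exists ((s^-1)%g a); rewrite permKV.
exact: hiff.
Qed.


Lemma perm_half (s : {perm A}) (K : pred A) :
  (forall u v, K u -> ~~ K (s u) -> ~~ K v -> K (s v) -> False) ->
  forall x, K x -> K (s x).
Proof.
move=> H u Ku; apply/negPn/negP => nKsu.
pose C := [set x | K x]%SET.
have : ~~ (C \subset [set s x | x in C]%SET).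
  apply/negP => sub.
  have eqC : C == [set s x | x in C]%SET.
    by rewrite eqEcard sub (card_imset _ (@perm_inj _ s)) leqnn.
  have : s u \in [set s x | x in C]%SET by rewrite mem_imset ?inE //; exact: perm_inj.
  by rewrite -(eqP eqC) inE (negbTE nKsu).
case/subsetPn => w; rewrite inE => Kw wn.
apply: (H u ((s^-1)%g w)) => //; last by rewrite permKV.
apply/negP => Kv; move/negP: wn; apply.
by rewrite -{1}(permKV s w) mem_imset ?inE //; exact: perm_inj.
Qed.

Lemma perm_thresh (s : {perm A}) (K : pred A) :
  (forall u v, K u -> ~~ K (s u) -> ~~ K v -> K (s v) -> False) ->
  forall x, K (s x) = K x.
Proof.
move=> H x.
have h1 := @perm_half s K H.
have h2 : forall x, ~~ K x -> ~~ K (s x).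
  apply: (@perm_half s (fun x => ~~ K x)) => u v nKu Ksu nKv Ksv.
  by apply: (H v u) => //; rewrite ?negbK in nKv Ksu *.
case Kx: (K x); first exact: h1.
by apply/negbTE/h2; rewrite Kx.
Qed.

Lemma regular_rigid (e : dord A) (s : {perm A}) (f : config R A) :
  regular e -> Uset R e f ->
  (forall a b, e.1 (s a) (s b) -> (f a).1 < (f b).1) ->
  (forall a b, e.2 (s a) (s b) -> (f a).2 < (f b).2) -> s = 1%g.
Proof.
case=> [[[i1 t1] [[i2 t2] cmp]] [[l [h [hr [hs hiff]]]] nxy]] [U1 U2] S1 S2.
have hs_eq : forall a, h (s a) = h a.
  have th : forall t x, (h (s x) <= t)%N = (h x <= t)%N.
    move=> t; apply: (@perm_thresh s (fun x => h x <= t)%N) => u v /= hu hsu hv hsv.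
    have e1 : e.1 u v by apply/hiff; rewrite -ltnNge in hv; exact: leq_ltn_trans hu hv.
    have e2 : e.1 (s v) (s u) by apply/hiff; rewrite -ltnNge in hsu; exact: leq_ltn_trans hsv hsu.
    have := U1 _ _ e1; have := S1 _ _ e2; move=> a1 a2.
    by have := lt_trans a1 a2; rewrite ltxx.
  move=> a; apply/eqP; rewrite eqn_leq th leqnn /=.
  by rewrite -th; rewrite leqnn.
pose L x y := e.1 x y \/ e.2 x y.
have e2h : forall x y, e.2 x y -> h x = h y.
  move=> x y exy; apply/eqP; rewrite eqn_leq; apply/andP; split; rewrite leqNgt; apply/negP => /hiff H.
    by apply: (nxy y x H); right.
  by apply: (nxy x y H); left.
have mono : forall x y, L x y -> L (s x) (s y).
  move=> x y [H|H]; first by left; apply/hiff; rewrite !hs_eq; apply/hiff.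
  have hxy := e2h _ _ H.
  have nx : x <> y by move=> xy; rewrite xy in H; exact: i2 H.
  have sxy : s x <> s y by move/perm_inj.
  case: (cmp _ _ sxy) => [[H1|H1]|[H1|H1]].
  - by move/hiff: H1; rewrite !hs_eq hxy ltnn.
  - by move/hiff: H1; rewrite !hs_eq hxy ltnn.
  - by right.
  - have := S2 _ _ H1; have := U2 _ _ H => a1 a2.
    by have := lt_trans a1 a2; rewrite ltxx.
have Ltr : forall x y z, L x y -> L y z -> L x z.
  move=> x y z [H1|H1] [H2|H2].
  - by left; exact: t1 H1 H2.
  - by left; apply/hiff; rewrite -(e2h _ _ H2); apply/hiff.
  - by left; apply/hiff; rewrite (e2h _ _ H1); apply/hiff.
  - by right; exact: t2 H1 H2.
have Lirr : forall x, ~ L x x by move=> x [H|H]; [exact: i1 H|exact: i2 H].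
have Ltot : forall x y, x <> y -> L x y \/ L y x.
  by move=> x y /cmp [[H|H]|[H|H]]; [left; left|right; left|left; right|right; right].
have key : forall a x, `[< L a (s x) >] = `[< L a x >].
  move=> a x; apply: negb_inj; move: x.
  apply: (@perm_thresh s (fun x => ~~ `[< L a x >])) => u v /asboolPn nau /negPn /asboolP asu /negPn /asboolP av /asboolPn nasv.
  have uv : u <> v by move=> uv; rewrite uv in nau; exact: nau av.
  case: (Ltot _ _ uv) => [Luv|Lvu]; last exact: nau (Ltr _ _ _ av Lvu).
  exact: nasv (Ltr _ _ _ asu (mono _ _ Luv)).
apply/permP => a; rewrite perm1.
have n1 : ~ L a (s a) by move/asboolP; rewrite key => /asboolP; exact: Lirr.
have n2 : ~ L (s a) a by move/asboolP; rewrite -key => /asboolP; exact: Lirr.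
case: (eqVneq (s a) a) => // /eqP ne.
by case: (Ltot _ _ ne).
Qed.


Lemma sorted_index_lt (s : seq R) x y : sorted <=%R s -> uniq s -> x \in s -> y \in s ->
  (x < y) = (index x s < index y s)%N.
Proof.
move=> so un xs ys.
have le_of := sorted_ltn_index (@le_trans _ R) so.
apply/idP/idP => H.
  rewrite ltnNge leq_eqVlt negb_or; apply/andP; split.
    apply/negP => /eqP e.
    have : nth 0 s (index y s) = nth 0 s (index x s) by rewrite e.
    by rewrite !nth_index // => yx; rewrite yx ltxx in H.
  apply/negP => /(le_of _ _ ys xs) yx.
  by have := lt_le_trans H yx; rewrite ltxx.
rewrite lt_neqAle le_of // andbT.
by apply/negP => /eqP xy; rewrite xy ltnn in H.
Qed.

Lemma cover_lemma (f : config R A) : injective f -> exists2 d, semi_regular d & Uset R d f.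
Proof.
move=> inj.
pose xs := sort <=%R (undup [seq (f a).1 | a <- enum A]).
have xsu : uniq xs by rewrite sort_uniq undup_uniq.
have xss : sorted <=%R xs by apply: sort_sorted; exact: le_total.
have memx : forall a, (f a).1 \in xs.
  by move=> a; rewrite mem_sort mem_undup; apply: map_f; rewrite mem_enum.
pose h a := (index (f a).1 xs).+1.
pose e : dord A := (fun a b => is_true ((f a).1 < (f b).1), fun a b => (f a).1 = (f b).1 /\ (f a).2 < (f b).2).
have sp1 : strict_porder e.1.
  by split => [a /=|a b c /=]; [rewrite ltxx|exact: lt_trans].
have sp2 : strict_porder e.2.
  split => [a /= [_]|a b c /= [-> h1] [-> h2]]; first by rewrite ltxx.
  by split => //; exact: lt_trans h1 h2.
have dd : is_double_order e.
  split => //; split => // a b ab.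
  have fab : f a != f b by apply/eqP => /inj.
  case: (eqVneq (f a).1 (f b).1) => h1.
    right; have : (f a).2 != (f b).2.
      apply: contra fab => /eqP h2; apply/eqP.
      by rewrite (surjective_pairing (f a)) (surjective_pairing (f b)) h1 h2.
    by case/lt_total/orP => H; [left|right]; split.
  by left; case/orP: (lt_total h1) => H; [left|right].
have reg : regular e.
  split => //; split; last first.
    by move=> a b /= ab [[eq _]|[eq _]]; move: ab; rewrite eq ltxx.
  exists (size xs), h; split; [|split].
  - by move=> a; rewrite /h /= index_mem memx.
  - move=> k /andP [k1 kl].
    have kin : (k.-1 < size xs)%N by apply: (leq_trans _ kl); rewrite ltn_predL.
    have : nth 0 xs k.-1 \in xs := mem_nth 0 kin.
    rewrite mem_sort mem_undup => /mapP [a _ ha].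
    by exists a; rewrite /h -ha index_uniq // prednK.
  - by move=> a b /=; rewrite /h ltnS (@sorted_index_lt xs _ _ xss xsu (memx a) (memx b)).
exists e; last by split => a b //= [].
split => //; exists [:: e]; split; first by move=> e' [<-|[]].
by rewrite dunion1.
Qed.

Lemma Uset_dunion (es : seq (dord A)) (f : config R A) :
  Uset R (dunion es) f <-> forall e, List.In e es -> Uset R e f.
Proof.
split.
  move=> [H1 H2] e He; split => a b Hab; [apply: H1|apply: H2].
    by apply: (@tc_step _ e.1) => //; apply/In_map; exists e.
  by apply: (@tc_step _ e.2) => //; apply/In_map; exists e.
move=> H; split.
  apply: (@tc_ind _ (fun a b => (f a).1 < (f b).1)) => [a b c|a b [r /In_map [e [<- He]] Hab]].
    exact: lt_trans.
  exact: (H e He).1 _ _ Hab.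
apply: (@tc_ind _ (fun a b => (f a).2 < (f b).2)) => [a b c|a b [r /In_map [e [<- He]] Hab]].
  exact: lt_trans.
exact: (H e He).2 _ _ Hab.
Qed.

Lemma set_act_eq (d : dord A) (s : {perm A}) :
  set_act (Uset R d) s = Uset R (dord_act d s).
Proof.
rewrite eqEsubset; split.
  by move=> g [f [U1 U2] <-]; split => a b /= H; [exact: U1 | exact: U2].
move=> g [U1 U2]; exists (conf_act g (s^-1)%g).
  by split => a b H; [apply: U1 | apply: U2]; rewrite /= !permKV.
by apply: funext => a; rewrite /conf_act permK.
Qed.

Lemma proper_lemma (d : dord A) (s : {perm A}) : semi_regular d -> s != 1%g ->
  Uset R d `&` Uset R (dord_act d s) = set0.
Proof.
case=> dd [ds [reg dE]] s1; subst d.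
apply/seteqP; split => [f [Uf [V1 V2]]|//].
case: ds reg Uf V1 V2 dd => [|e es] reg Uf V1 V2 dd.
  case: dd => _ [_ cmp].
  have : [exists a, s a != a].
    apply: contraNT s1 => /existsPn H; apply/eqP/permP => a; rewrite perm1.
    by apply/eqP; move: (H a); rewrite negbK.
  case/existsP => a /eqP sa.
  by case: (cmp _ _ sa) => [[H|H]|[H|H]]; exact: tc_nil H.
have Ue : Uset R e f := (proj1 (Uset_dunion _ _) Uf) e (or_introl erefl).
apply: (negP s1); apply/eqP; apply: (@regular_rigid e s f (reg e (or_introl erefl)) Ue) => a b H.
  by apply: V1; apply: (@tc_step _ e.1) => //; left.
by apply: V2; apply: (@tc_step _ e.2) => //; left.
Qed.

Lemma complete_lemma (ds : seq (dord A)) : ds <> [::] ->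
  (forall d, List.In d ds -> semi_regular d) ->
  intersection (Uset R) ds !=set0 ->
  exists2 e : dord A, semi_regular e & Uset R e = intersection (Uset R) ds.
Proof.
move=> ne sr [f0 If0].
have [es [reg [eqU [inc1 inc2]]]] : exists es : seq (dord A),
    (forall e, List.In e es -> regular e) /\
    (forall f, Uset R (dunion es) f <-> intersection (Uset R) ds f) /\
    (forall d a b, List.In d ds -> d.1 a b -> (dunion es).1 a b) /\
    (forall d a b, List.In d ds -> d.2 a b -> (dunion es).2 a b).
  clear ne If0; elim: ds sr => [|d ds IH] sr.
    exists [::]; split => //; split; last by split => d a b [].
    move=> f; split; first by move=> _ d [].
    by move=> _; split => a b /= /tc_nil.
  have [dd [esd [regd dE]]] := sr d (or_introl erefl).
  have [es [reg [eqU [inc1 inc2]]]] := IH (fun d' H => sr d' (or_intror H)).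
  exists (esd ++ es); split; [|split; [|split]].
  - by move=> e /In_cat [/regd|/reg].
  - move=> f; split.
      move=> H.
      have H1 : Uset R (dunion esd) f.
        by apply/Uset_dunion => e He; apply: (proj1 (Uset_dunion _ _) H); apply/In_cat; left.
      have H2 : Uset R (dunion es) f.
        by apply/Uset_dunion => e He; apply: (proj1 (Uset_dunion _ _) H); apply/In_cat; right.
      move=> d' [<-|Hd']; first by rewrite dE.
      exact: (proj1 (eqU f) H2 d' Hd').
    move=> H; apply/Uset_dunion => e /In_cat [He|He].
      by move: (H d (or_introl erefl)); rewrite {1}dE => /Uset_dunion; apply.
    have : intersection (Uset R) ds f by move=> d' Hd'; apply: H; right.
    by move/eqU/Uset_dunion; apply.
  - move=> d' a b [<-|Hd'] H.
      rewrite dE in H; apply: tc_sub H => r /In_map [e [<- He]].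
      by apply/In_map; exists e; split => //; apply/In_cat; left.
    apply: tc_sub (inc1 _ _ _ Hd' H) => r /In_map [e [<- He]].
    by apply/In_map; exists e; split => //; apply/In_cat; right.
  - move=> d' a b [<-|Hd'] H.
      rewrite dE in H; apply: tc_sub H => r /In_map [e [<- He]].
      by apply/In_map; exists e; split => //; apply/In_cat; left.
    apply: tc_sub (inc2 _ _ _ Hd' H) => r /In_map [e [<- He]].
    by apply/In_map; exists e; split => //; apply/In_cat; right.
have Uf0 := proj2 (eqU f0) If0.
exists (dunion es).
  split; last by exists es.
  split; [|split].
  - split => [a H|a b c]; last exact: t_trans.
    by have := Uf0.1 a a H; rewrite ltxx.
  - split => [a H|a b c]; last exact: t_trans.
    by have := Uf0.2 a a H; rewrite ltxx.
  - move=> a b ab.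
    case: ds ne sr eqU inc1 inc2 If0 => [//|d0 ds'] _ sr _ inc1 inc2 _.
    have [[_ [_ cmp]] _] := sr d0 (or_introl erefl).
    case: (cmp a b ab) => [[H|H]|[H|H]].
    + by left; left; exact: (inc1 d0 _ _ (or_introl erefl) H).
    + by left; right; exact: (inc1 d0 _ _ (or_introl erefl) H).
    + by right; left; exact: (inc2 d0 _ _ (or_introl erefl) H).
    + by right; right; exact: (inc2 d0 _ _ (or_introl erefl) H).
by apply/seteqP; split => f /eqU.
Qed.

Lemma conv_lt (t u u' v v' : R) : 0 <= t <= 1 -> u < u' -> v < v' ->
  (1 - t) * u + t * v < (1 - t) * u' + t * v'.
Proof.
move=> /andP [t0 t1] h1 h2.
have t1' : 0 <= 1 - t by rewrite subr_ge0.
case: (ltrP 0 t) => tp.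
  by apply: ler_ltD; [apply: ler_wpM2l => //; exact: ltW | rewrite ltr_pM2l].
have -> : t = 0 by apply/le_anti; rewrite tp t0.
by rewrite subr0 !mul1r !mul0r !addr0.
Qed.

Lemma good_lemma (ds : seq (dord A)) : intersection (Uset R) ds !=set0 ->
  contractible R (intersection (Uset R) ds).
Proof.
case=> c Ic; exists c => //; exists (Hh c); split.
- exact: continuous_subspaceT (Hh_cont c).
- move=> t x tt Ix d Hd.
  have [U1 U2] := Ix d Hd; have [C1 C2] := Ic d Hd.
  by split => a b H; rewrite /Hh /=; apply: conv_lt tt (U1 _ _ H) (C1 _ _ H) || apply: conv_lt tt (U2 _ _ H) (C2 _ _ H).
- move=> x _; apply: funext => a; rewrite /Hh /= subr0 !mul1r !mul0r !addr0.
  exact: (esym (surjective_pairing _)).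
- move=> x _; apply: funext => a; rewrite /Hh /= subrr !mul0r !add0r !mul1r.
  exact: (esym (surjective_pairing _)).
Qed.

Lemma Uset_inj (d : dord A) : is_double_order d -> Uset R d `<=` OConf R A.
Proof.
move=> [_ [_ cmp]] f [U1 U2] a b fab.
case: (eqVneq a b) => // /eqP ab; exfalso.
case: (cmp _ _ ab) => [[H|H]|[H|H]];
  [have := U1 _ _ H|have := U1 _ _ H|have := U2 _ _ H|have := U2 _ _ H]; by rewrite fab ltxx.
Qed.
End S.

Theorem proposition5p6 (R : realType) (A : finType) :
  (* each member is an open subset of OConf(A, R^2) *)
  (forall d : dord A, semi_regular d ->
     Uset R d `<=` OConf R A /\ open_in (OConf R A) (Uset R d)) /\
  (* it covers OConf(A, R^2) *)
  (forall f : config R A, OConf R A f ->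
     exists2 d : dord A, semi_regular d & Uset R d f) /\
  (* Sigma_A-equivariance: Sigma_A acts on the index set R^+(A), and U_d s = U_(d s) *)
  (forall (d : dord A) (s : {perm A}), semi_regular d ->
     semi_regular (dord_act d s) /\
     set_act (Uset R d) s = Uset R (dord_act d s)) /\
  (* properness *)
  (forall (d : dord A) (s : {perm A}), semi_regular d -> s != 1%g ->
     Uset R d `&` Uset R (dord_act d s) = set0) /\
  (* good: non-empty finite intersections are contractible *)
  (forall ds : seq (dord A), ds <> [::] ->
     (forall d, List.In d ds -> semi_regular d) ->
     intersection (Uset R) ds !=set0 ->
     contractible R (intersection (Uset R) ds)) /\
  (* complete: closed under non-empty intersections *)
  (forall ds : seq (dord A), ds <> [::] ->
     (forall d, List.In d ds -> semi_regular d) ->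
     intersection (Uset R) ds !=set0 ->
     exists2 e : dord A, semi_regular e & Uset R e = intersection (Uset R) ds).

Proof.
split.
  move=> d [dd _]; split; first exact: Uset_inj.
  exists (Uset R d); first exact: open_Uset.
  by rewrite setIidl //; exact: Uset_inj.
split; first by move=> f Hf; exact: cover_lemma.
split.
  move=> d s sr; split; last exact: set_act_eq.
  case: sr => dd [ds [reg dE]]; split; first exact: dord_act_double.
  exists (map (fun e => dord_act e s) ds); split.
    by move=> e /In_map [e' [<- He']]; apply: regular_act; exact: reg.
  rewrite dE /dord_act /dunion /=; congr pair.
    apply: funext => a; apply: funext => b; apply: propext; apply: iff_sym.
    by apply: (@tc_act _ fst) => e x y.
  apply: funext => a; apply: funext => b; apply: propext; apply: iff_sym.
  by apply: (@tc_act _ snd) => e x y.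
split; first by move=> d s sr s1; exact: proper_lemma.
split; first by move=> ds _ _ ne; exact: good_lemma.
exact: complete_lemma.
Qed.
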